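(* Let $\Gamma$ be a modular pattern. There is an integer $m$ such that whenever two ideal triangles $\tau_1,\tau_2$ of the modular tiling have combinatorial distance at least $m$, at most one geodesic of $\Gamma$ intersects both $\tau_1$ and $\tau_2$.
   Context: A modular pattern is a $PSL_2(\mathbb Z)$-invariant collection $\Gamma$ of complete geodesics in $\mathbf H^2$ with finitely many $PSL_2(\mathbb Z)$-orbits, each geodesic stabilized by an infinite-order subgroup of $PSL_2(\mathbb Z)$. The modular tiling $T$ is the $PSL_2(\mathbb Z)$-invariant tiling of $\mathbf H^2$ by ideal triangles generated by reflections in the sides of the ideal triangle with vertices $0,1,\infty$ (upper half-plane). The combinatorial distance between two ideal triangles of $T$ is the number of edges of $T$ crossed by the geodesic segment joining their centers. *)

(* Defs.v *)
From Stdlib Require Import Reals ZArith List.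
Open Scope R_scope.

Definition pt := (R * R)%type.
Definition region := pt -> Prop.

Definition inH (p : pt) : Prop := 0 < snd p.

Definition img (f : pt -> pt) (S : region) : region :=
  fun p => exists q, S q /\ p = f q.

Definition meets (S T : region) : Prop := exists p, S p /\ T p.

(** Complete geodesics of H^2: vertical half-lines and half-circles
    orthogonal to the real axis, with endpoints a < b. *)
Definition vgeod (a : R) : region :=
  fun p => inH p /\ fst p = a.
Definition cgeod (a b : R) : region :=
  fun p => inH p /\ (fst p - a) * (fst p - b) + snd p * snd p = 0.

Definition is_geodesic (S : region) : Prop :=
  (exists a, S = vgeod a) \/ (exists a b, a < b /\ S = cgeod a b).

(** SL_2(Z); PSL_2(Z) = SL_2(Z)/{±1}, acting by Moebius maps. *)
Record SL2Z := { ma : Z; mb : Z; mc : Z; md : Z;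
                 mdet : (ma * md - mb * mc = 1)%Z }.

Definition moeb (g : SL2Z) (p : pt) : pt :=
  let a := IZR (ma g) in let b := IZR (mb g) in
  let c := IZR (mc g) in let d := IZR (md g) in
  let x := fst p in let y := snd p in
  let D := (c * x + d) * (c * x + d) + (c * y) * (c * y) in
  (((a * x + b) * (c * x + d) + a * c * (y * y)) / D, y / D).

Definition psl_eq (g h : SL2Z) : Prop :=
  (ma g = ma h /\ mb g = mb h /\ mc g = mc h /\ md g = md h) \/
  (ma g = (- ma h)%Z /\ mb g = (- mb h)%Z /\ mc g = (- mc h)%Z /\ md g = (- md h)%Z).

Definition infinite_stabilizer (gam : region) : Prop :=
  ~ (exists l : list SL2Z,
       forall g, img (moeb g) gam = gam -> exists h, In h l /\ psl_eq g h).

Definition modular_pattern (Gam : region -> Prop) : Prop :=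
  (forall gam, Gam gam -> is_geodesic gam) /\
  (forall g gam, Gam gam -> Gam (img (moeb g) gam)) /\
  (exists L : list region, forall gam, Gam gam ->
       exists gam0 g, In gam0 L /\ gam = img (moeb g) gam0) /\
  (forall gam, Gam gam -> infinite_stabilizer gam).

(** The modular tiling: the base (closed) ideal triangle with vertices
    0, 1, oo, and the group generated by reflections in its sides. *)
Definition Delta0 : region :=
  fun p => inH p /\ 0 <= fst p <= 1 /\
           (fst p - /2) * (fst p - /2) + snd p * snd p >= /4.

Definition side1 : region := vgeod 0.
Definition side2 : region := vgeod 1.
Definition side3 : region := cgeod 0 1.

Inductive refl_gen := Ref1 | Ref2 | Ref3.

Definition refl (r : refl_gen) (p : pt) : pt :=
  let x := fst p in let y := snd p in
  match r with
  | Ref1 => (- x, y)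
  | Ref2 => (2 - x, y)
  | Ref3 => let q := (x - /2) * (x - /2) + y * y in
            (/2 + (x - /2) / (4 * q), y / (4 * q))
  end.

(** Elements of the reflection group, as words in the generators. *)
Fixpoint word_act (w : list refl_gen) (p : pt) : pt :=
  match w with
  | nil => p
  | r :: w' => refl r (word_act w' p)
  end.

Definition tile (w : list refl_gen) : region := img (word_act w) Delta0.
Definition center0 : pt := (/2, sqrt 3 / 2).
Definition tile_center (w : list refl_gen) : pt := word_act w center0.

Definition is_edge (e : region) : Prop :=
  exists w, e = img (word_act w) side1 \/ e = img (word_act w) side2 \/
            e = img (word_act w) side3.

(** Hyperbolic geodesic segment joining two points of H^2. *)
Definition hseg (p1 p2 : pt) : region :=
  fun p =>
    let x1 := fst p1 in let y1 := snd p1 in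
    let x2 := fst p2 in let y2 := snd p2 in
    inH p /\
    ((x1 = x2 /\ fst p = x1 /\ Rmin y1 y2 <= snd p <= Rmax y1 y2) \/
     (x1 <> x2 /\ exists t,
        (x1 - t) * (x1 - t) + y1 * y1 = (x2 - t) * (x2 - t) + y2 * y2 /\
        (fst p - t) * (fst p - t) + snd p * snd p
          = (x1 - t) * (x1 - t) + y1 * y1 /\
        Rmin x1 x2 <= fst p <= Rmax x1 x2)).

(** Combinatorial distance between two tiles is >= m : at least m distinct
    edges of T are crossed by the segment joining the centers. *)
Definition comb_dist_ge (w1 w2 : list refl_gen) (m : nat) : Prop :=
  exists l : list region,
    length l = m /\ NoDup l /\
    Forall (fun e => is_edge e /\ meets e (hseg (tile_center w1) (tile_center w2))) l.

(* Main.v *)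
Require Import Defs.
From Stdlib Require Import Reals ZArith List.
From Stdlib Require Import Lra Lia Psatz Nsatz.
From Stdlib Require Import Classical FunctionalExtensionality PropExtensionality.
Open Scope R_scope.

Record form := mkF { fA : R; fB : R; fC : R }.
Definition K (Q : form) (x y : R) := fA Q*(x*x+y*y) + fB Q*x + fC Q.
Definition gs (Q : form) : region := fun p => inH p /\ K Q (fst p) (snd p) = 0.
Definition T (Q : form) (a b c d : R) : form :=
  mkF (fA Q*a*a + fB Q*a*c + fC Q*c*c)
      (2*fA Q*a*b + fB Q*(a*d+b*c) + 2*fC Q*c*d)
      (fA Q*b*b + fB Q*b*d + fC Q*d*d).
Definition dsc (Q : form) := fB Q * fB Q - 4 * fA Q * fC Q.
Definition scal (l : R) (Q : form) := mkF (l * fA Q) (l * fB Q) (l * fC Q).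

Lemma form_eq (Q Q' : form) : fA Q = fA Q' -> fB Q = fB Q' -> fC Q = fC Q' -> Q = Q'.
Proof. destruct Q, Q'; simpl; intros; subst; auto. Qed.

Lemma T_comp Q a b c d a' b' c' d' :
  T (T Q a b c d) a' b' c' d' = T Q (a*a'+b*c') (a*b'+b*d') (c*a'+d*c') (c*b'+d*d').
Proof. apply form_eq; unfold T; simpl; ring. Qed.

Lemma T_scal l Q a b c d : T (scal l Q) a b c d = scal l (T Q a b c d).
Proof. apply form_eq; unfold T, scal; simpl; ring. Qed.

Lemma T_id Q : T Q 1 0 0 1 = Q.
Proof. apply form_eq; unfold T; simpl; ring. Qed.

Lemma dsc_T Q a b c d : dsc (T Q a b c d) = (a*d-b*c)*(a*d-b*c) * dsc Q.
Proof. unfold dsc, T; simpl; ring. Qed.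

Lemma dsc_scal l Q : dsc (scal l Q) = l*l*dsc Q.
Proof. unfold dsc, scal; simpl; ring. Qed.

Lemma K_scal l Q x y : K (scal l Q) x y = l * K Q x y.
Proof. unfold K, scal; simpl; ring. Qed.

Lemma gs_scal l Q p : l <> 0 -> (gs (scal l Q) p <-> gs Q p).
Proof. intros Hl; unfold gs; rewrite K_scal; split; intros [H1 H2]; split; auto.
  - apply Rmult_integral in H2; destruct H2; auto; contradiction.
  - rewrite H2; ring. Qed.

Lemma autom_cross Q a b c d : a*d-b*c = 1 -> T Q a b c d = Q ->
  fA Q*(d-a) = fB Q*c /\ fA Q*b + fC Q*c = 0 /\ fB Q*b + fC Q*(d-a) = 0.
Proof. destruct Q as [A B C]; unfold T; simpl; intros H E; injection E; intros E3 E2 E1; clear E.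
  repeat split; nsatz. Qed.

(* proportionality from cross conditions with F = (c, d-a, -b) *)
Lemma cross_scal Q f1 f2 f3 : (f1 <> 0 \/ f2 <> 0 \/ f3 <> 0) ->
  fA Q*f2 = fB Q*f1 -> fA Q*(-f3) + fC Q*f1 = 0 -> fB Q*(-f3) + fC Q*f2 = 0 ->
  exists mu, Q = scal mu (mkF f1 f2 f3).
Proof. destruct Q as [A B C]; simpl; intros Hn E1 E2 E3.
  destruct Hn as [H|[H|H]].
  - exists (A/f1); apply form_eq; unfold scal; simpl.
    + field; auto.
    + apply (Rmult_eq_reg_r f1); auto. field_simplify; auto; nra.
    + apply (Rmult_eq_reg_r f1); auto. field_simplify; auto; nra.
  - exists (B/f2); apply form_eq; unfold scal; simpl.
    + apply (Rmult_eq_reg_r f2); auto. field_simplify; auto; nra.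
    + field; auto.
    + apply (Rmult_eq_reg_r f2); auto. field_simplify; auto; nra.
  - exists (C/f3); apply form_eq; unfold scal; simpl.
    + apply (Rmult_eq_reg_r f3); auto. field_simplify; auto; nra.
    + apply (Rmult_eq_reg_r f3); auto. field_simplify; auto; nra.
    + field; auto.
Qed.

Lemma den_pos a b c d x y : a*d-b*c=1 -> 0 < y -> 0 < (c*x+d)*(c*x+d) + (c*y)*(c*y).
Proof. intros H Hy. destruct (Req_dec c 0) as [->|Hc].
  - assert (d<>0). { intro E. rewrite E in H. lra. }
    assert (0 < d*d) by (apply Rsqr_pos_lt; auto). replace ((0*x+d)*(0*x+d) + (0*y)*(0*y)) with (d*d) by ring. lra.
  - assert (0 < (c*y)*(c*y)). { apply Rsqr_pos_lt. intro E. apply Rmult_integral in E. lra. }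
    assert (0 <= (c*x+d)*(c*x+d)) by apply Rle_0_sqr. lra.
Qed.

Lemma moebR_K Q a b c d x y : a*d-b*c=1 -> 0 < y ->
  let D := (c*x+d)*(c*x+d) + (c*y)*(c*y) in
  D * K Q (((a*x+b)*(c*x+d) + a*c*(y*y))/D) (y/D) = K (T Q a b c d) x y.
Proof. intros H Hy D. destruct Q as [A B C].
  assert (HD: D <> 0) by (apply Rgt_not_eq, (den_pos a b c d); auto).
  unfold K, T; simpl.
  assert (E: ((a*x+b)*(c*x+d) + a*c*(y*y))*((a*x+b)*(c*x+d) + a*c*(y*y)) + y*y = ((a*x+b)*(a*x+b) + (a*y)*(a*y))*D).
  { assert (E0: ((a*x+b)*(c*x+d) + a*c*(y*y))*((a*x+b)*(c*x+d) + a*c*(y*y)) + (y*y)*((a*d-b*c)*(a*d-b*c)) = ((a*x+b)*(a*x+b) + (a*y)*(a*y))*D) by (unfold D; ring).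
    rewrite H in E0. rewrite <- E0. ring. }
  replace (D * (A * (((a * x + b) * (c * x + d) + a * c * (y * y)) / D * (((a * x + b) * (c * x + d) + a * c * (y * y)) / D) + y / D * (y / D)) +
 B * (((a * x + b) * (c * x + d) + a * c * (y * y)) / D) + C))
  with (A * ((((a * x + b) * (c * x + d) + a * c * (y * y)) * ((a * x + b) * (c * x + d) + a * c * (y * y)) + y*y)/D) + B * ((a * x + b) * (c * x + d) + a * c * (y * y)) + C*D) by (field; auto).
  rewrite E. unfold D. field. exact HD.
Qed.

Definition Tg (Q : form) (g : SL2Z) := T Q (IZR (ma g)) (IZR (mb g)) (IZR (mc g)) (IZR (md g)).

Lemma detR (g : SL2Z) : IZR (ma g) * IZR (md g) - IZR (mb g) * IZR (mc g) = 1.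
Proof. rewrite <- !mult_IZR, <- minus_IZR, (mdet g). reflexivity. Qed.

Lemma moeb_gs g Q p : inH p -> (gs Q (moeb g p) <-> gs (Tg Q g) p).
Proof. destruct p as [x y]; unfold inH, gs, moeb, Tg; simpl; intros Hy.
  pose proof (detR g) as Hd.
  set (a := IZR (ma g)) in *; set (b := IZR (mb g)) in *; set (c := IZR (mc g)) in *; set (d := IZR (md g)) in *.
  pose proof (den_pos a b c d x y Hd Hy) as HD.
  pose proof (moebR_K Q a b c d x y Hd Hy) as HK. simpl in HK.
  split; intros [H1 H2]; split.
  - exact Hy.
  - rewrite <- HK, H2; ring.
  - unfold inH; simpl; apply Rdiv_lt_0_compat; auto.
  - rewrite <- HK in H2. apply Rmult_integral in H2. destruct H2; auto. lra.
Qed.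

Lemma moeb_H_rev g p : inH (moeb g p) -> inH p.
Proof. destruct p as [x y]; unfold inH, moeb; simpl. intro H.
  set (D := (IZR (mc g) * x + IZR (md g)) * (IZR (mc g) * x + IZR (md g)) + IZR (mc g) * y * (IZR (mc g) * y)) in *.
  assert (0 <= D) by (unfold D; apply Rplus_le_le_0_compat; apply Rle_0_sqr).
  destruct (Rle_lt_dec y 0); auto.
  exfalso. destruct (Req_dec D 0) as [E|E].
  - rewrite E in H. unfold Rdiv in H. rewrite Rinv_0 in H. lra.
  - assert (0 < D) by lra. assert (0 < /D) by (apply Rinv_0_lt_compat; auto).
    unfold Rdiv in H. nra.
Qed.

Lemma gs_incl_scal Q Q' : 0 < dsc Q -> (forall p, gs Q p -> gs Q' p) -> exists l, Q' = scal l Q.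
Proof. destruct Q as [A B C], Q' as [A' B' C']; unfold dsc, gs, K, inH; simpl. intros HD Hi.
  destruct (Req_dec A 0) as [HA|HA].
  - subst A. assert (HB: B <> 0) by (intro; subst; lra).
    set (x0 := - C / B).
    assert (H1 := Hi (x0, 1)). assert (H2 := Hi (x0, 2)). simpl in H1, H2.
    assert (E0: 0 * (x0 * x0 + 1 * 1) + B * x0 + C = 0) by (unfold x0; field; auto).
    assert (E0': 0 * (x0 * x0 + 2 * 2) + B * x0 + C = 0) by (unfold x0; field; auto).
    destruct (H1 (conj Rlt_0_1 E0)) as [_ F1]. destruct (H2 (conj (ltac:(lra) : 0 < 2) E0')) as [_ F2].
    assert (A' = 0) by lra. subst A'.
    exists (B'/B). apply form_eq; simpl.
    + ring.
    + field; auto.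
    + assert (C' = -B'*x0) by lra. rewrite H. unfold x0. field; auto.
  - set (xc := - B / (2*A)). set (u := (B*B-4*A*C)/(4*A*A)).
    assert (Hu: 0 < u). { unfold u. apply Rdiv_lt_0_compat; auto. assert (0 < A*A) by (apply Rsqr_pos_lt; auto). lra. }
    set (e := u/(u+1)).
    assert (He: 0 < e) by (unfold e; apply Rdiv_lt_0_compat; lra).
    assert (He2: e*e < u). { assert (e < 1) by (unfold e; apply Rmult_lt_reg_r with (u+1); [lra|]; unfold Rdiv; rewrite Rmult_assoc, Rinv_l; lra).
      assert (e < u). { unfold e. apply Rmult_lt_reg_r with (u+1); [lra|]. unfold Rdiv; rewrite Rmult_assoc, Rinv_l; nra. }
      nra. }
    assert (Hpt: forall t, t*t < u -> A' * (B*(xc+t)+C) - A*(B'*(xc+t)+C') = 0).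
    { intros t Ht. set (y := sqrt (u - t*t)).
      assert (Hy: 0 < y) by (apply sqrt_lt_R0; lra).
      assert (Hyy: y*y = u - t*t) by (apply sqrt_sqrt; lra).
      assert (Hon: A * ((xc+t) * (xc+t) + y * y) + B * (xc+t) + C = 0).
      { rewrite Hyy. unfold xc, u. field. auto. }
      destruct (Hi (xc+t, y) (conj Hy Hon)) as [_ F]. simpl in F.
      assert (Hs: (xc+t)*(xc+t) + y*y = -(B*(xc+t)+C)/A) by (apply (Rmult_eq_reg_l A); auto; field_simplify; auto; lra).
      rewrite Hs in F.
      replace (A' * (B*(xc+t)+C) - A*(B'*(xc+t)+C')) with (-A * (A' * (-(B*(xc+t)+C)/A) + B'*(xc+t) + C')) by (field; auto).
      rewrite F; ring. }
    assert (P0 := Hpt 0 ltac:(lra)). assert (P1 := Hpt e He2).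
    assert (L1: A'*B - A*B' = 0). { apply (Rmult_eq_reg_r e); [|lra]. nra. }
    assert (L2: A'*C - A*C' = 0). { replace (xc+0) with xc in P0 by ring.
      assert (Hx: (A'*B - A*B')*xc = 0) by (rewrite L1; ring). lra. }
    exists (A'/A). apply form_eq; simpl.
    + field; auto.
    + apply (Rmult_eq_reg_r A); auto. field_simplify; auto. lra.
    + apply (Rmult_eq_reg_r A); auto. field_simplify; auto. lra.
Qed.

Lemma inv_det (g : SL2Z) : (md g * ma g - (- mb g) * (- mc g) = 1)%Z.
Proof. pose proof (mdet g). lia. Qed.
Definition inv (g : SL2Z) : SL2Z := Build_SL2Z (md g) (- mb g) (- mc g) (ma g) (inv_det g).

Lemma T_ext Q a b c d a' b' c' d' : a = a' -> b = b' -> c = c' -> d = d' -> T Q a b c d = T Q a' b' c' d'.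
Proof. intros; subst; auto. Qed.

Lemma Tg_inv Q g : Tg (Tg Q (inv g)) g = Q.
Proof. unfold Tg; rewrite T_comp. simpl. pose proof (detR g) as H. rewrite <- (T_id Q) at 2.
  apply T_ext; rewrite ?opp_IZR; lra. Qed.
Lemma Tg_inv' Q g : Tg (Tg Q g) (inv g) = Q.
Proof. unfold Tg; rewrite T_comp. simpl. pose proof (detR g) as H. rewrite <- (T_id Q) at 2.
  apply T_ext; rewrite ?opp_IZR; lra. Qed.

Lemma scal_scal l l' Q : scal l (scal l' Q) = scal (l*l') Q.
Proof. apply form_eq; unfold scal; simpl; ring. Qed.
Lemma scal_1 Q : scal 1 Q = Q.
Proof. apply form_eq; unfold scal; simpl; ring. Qed.

Lemma geo_form gam : is_geodesic gam -> exists Q, 0 < dsc Q /\ forall p, gam p <-> gs Q p.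
Proof. intros [[a ->]|[a [b [Hab ->]]]].
  - exists (mkF 0 1 (-a)). split. { unfold dsc; simpl; lra. }
    intros [x y]; unfold vgeod, gs, K; simpl. split; intros [H1 H2]; split; auto; lra.
  - exists (mkF 1 (-(a+b)) (a*b)). split. { unfold dsc; simpl. nra. }
    intros [x y]; unfold cgeod, gs, K; simpl. split; intros [H1 H2]; split; auto; lra.
Qed.

Lemma stab_lam gam Q h : (forall p, gam p <-> gs Q p) -> 0 < dsc Q ->
  img (moeb h) gam = gam -> exists l, l*l = 1 /\ Tg Q (inv h) = scal l Q.
Proof. intros Hg HD Hs.
  assert (Hi: forall p, gs Q p -> gs (Tg Q (inv h)) p).
  { intros p Hp. apply Hg in Hp. rewrite <- Hs in Hp. destruct Hp as [q [Hq ->]].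
    apply Hg in Hq. apply moeb_gs. { apply Hq. } rewrite Tg_inv. exact Hq. }
  destruct (gs_incl_scal _ _ HD Hi) as [l Hl]. exists l; split; auto.
  assert (E: dsc (Tg Q (inv h)) = dsc Q). { unfold Tg; rewrite dsc_T. rewrite (detR (inv h)). ring. }
  rewrite Hl, dsc_scal in E. apply (Rmult_eq_reg_r (dsc Q)); lra.
Qed.

Lemma inf_stab gam : infinite_stabilizer gam -> forall l, exists g, img (moeb g) gam = gam /\ forall h, In h l -> ~ psl_eq g h.
Proof. intros Hinf l. apply NNPP. intro Hn. apply Hinf. exists l. intros g Hg.
  apply NNPP. intro Hn2. apply Hn. exists g. split; auto. intros h Hh Hp. apply Hn2. exists h; auto. Qed.

Definition Zgood (gam : region) (A B C t : Z) :=
  (forall p, gam p <-> gs (mkF (IZR A) (IZR B) (IZR C)) p) /\ (3 <= Z.abs t)%Z /\ (B*B - 4*A*C = t*t - 4)%Z.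

Lemma pair_form gam Q hi hj l : (forall p, gam p <-> gs Q p) -> 0 < dsc Q -> l * l = 1 ->
  Tg Q (inv hi) = scal l Q -> Tg Q (inv hj) = scal l Q -> ~ psl_eq hj hi ->
  exists A B C t, Zgood gam A B C t.
Proof. intros Hg HD Hl Ei Ej Hne.
  pose proof (mdet hi) as deti; pose proof (mdet hj) as detj.
  set (ai := ma hi) in *; set (bi := mb hi) in *; set (ci := mc hi) in *; set (di := md hi) in *.
  set (aj := ma hj) in *; set (bj := mb hj) in *; set (cj := mc hj) in *; set (dj := md hj) in *.
  set (al := (di*aj - bi*cj)%Z). set (be := (di*bj - bi*dj)%Z).
  set (ga := (-ci*aj + ai*cj)%Z). set (de := (-ci*bj + ai*dj)%Z).
  assert (Hdm : (al*de - be*ga = 1)%Z) by (unfold al, be, ga, de; nia).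
  assert (HT: T Q (IZR al) (IZR be) (IZR ga) (IZR de) = Q).
  { assert (Ej': Tg Q hj = scal l Q).
    { assert (X := Tg_inv Q hj). rewrite Ej in X. unfold Tg in X. rewrite T_scal in X.
      fold (Tg Q hj) in X. transitivity (scal l (scal l (Tg Q hj))).
      - rewrite scal_scal, Hl, scal_1; reflexivity.
      - rewrite X; reflexivity. }
    assert (E2: Tg (Tg Q (inv hi)) hj = Q).
    { rewrite Ei. unfold Tg at 1. rewrite T_scal. fold (Tg Q hj). rewrite Ej', scal_scal, Hl, scal_1. reflexivity. }
    transitivity (Tg (Tg Q (inv hi)) hj); [|exact E2].
    unfold Tg; rewrite T_comp; simpl. apply T_ext; unfold al, be, ga, de, ai, bi, ci, di, aj, bj, cj, dj;
      rewrite ?plus_IZR, ?minus_IZR, ?mult_IZR, ?opp_IZR; ring. }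
  assert (HdmR: IZR al * IZR de - IZR be * IZR ga = 1).
  { rewrite <- !mult_IZR, <- minus_IZR, Hdm. reflexivity. }
  destruct (autom_cross Q _ _ _ _ HdmR HT) as [c1 [c2 c3]].
  assert (Fnz: IZR ga <> 0 \/ IZR (de - al) <> 0 \/ IZR (- be) <> 0).
  { apply NNPP; intro Hn. apply Hne.
    assert (ga = 0%Z /\ (de - al)%Z = 0%Z /\ (- be)%Z = 0%Z) as [G1 [G2 G3]].
    { repeat split; apply eq_IZR; apply NNPP; intro; apply Hn; auto. }
    assert (Hal: (al*al = 1)%Z) by nia.
    assert (I1: (ai*al + bi*ga = aj*(ai*di - bi*ci))%Z) by (unfold al, ga; ring).
    assert (I2: (ai*be + bi*de = bj*(ai*di - bi*ci))%Z) by (unfold be, de; ring).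
    assert (I3: (ci*al + di*ga = cj*(ai*di - bi*ci))%Z) by (unfold al, ga; ring).
    assert (I4: (ci*be + di*de = dj*(ai*di - bi*ci))%Z) by (unfold be, de; ring).
    rewrite deti in I1, I2, I3, I4.
    assert (be = 0)%Z by lia. assert (de = al)%Z by lia.
    assert (E1: (aj = al*ai)%Z). { rewrite G1 in I1. lia. }
    assert (E2: (bj = al*bi)%Z). { rewrite H, H0 in I2. lia. }
    assert (E3: (cj = al*ci)%Z). { rewrite G1 in I3. lia. }
    assert (E4: (dj = al*di)%Z). { rewrite H, H0 in I4. lia. }
    unfold psl_eq; simpl.
    assert (al = 1 \/ al = -1)%Z as [->| ->] by nia; [left|right]; lia. }
  rewrite minus_IZR, opp_IZR in Fnz.
  destruct (cross_scal Q (IZR ga) (IZR de - IZR al) (- IZR be) Fnz) as [mu Hmu].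
  { lra. } { lra. } { lra. }
  assert (HdF: 0 < dsc (mkF (IZR ga) (IZR (de - al)) (IZR (- be)))).
  { rewrite Hmu, dsc_scal in HD. rewrite minus_IZR, opp_IZR.
    destruct (Rle_lt_dec (dsc (mkF (IZR ga) (IZR de - IZR al) (- IZR be))) 0); auto.
    exfalso. assert (0 <= mu*mu) by apply Rle_0_sqr. nra. }
  assert (Hmu0: mu <> 0). { intro E. rewrite Hmu, E, dsc_scal in HD. lra. }
  exists ga, (de - al)%Z, (- be)%Z, (al + de)%Z. unfold Zgood. split; [|split].
  - intro p. rewrite Hg, Hmu. rewrite minus_IZR, opp_IZR. apply gs_scal; auto.
  - unfold dsc in HdF; simpl in HdF.
    assert (HZ: (0 < (de-al)*(de-al) - 4*ga*(-be))%Z).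
    { apply lt_IZR. rewrite minus_IZR, !mult_IZR. exact HdF. }
    nia.
  - nia.
Qed.

Lemma stab_form gam : is_geodesic gam -> infinite_stabilizer gam -> exists A B C t, Zgood gam A B C t.
Proof. intros Hgeo Hinf. destruct (geo_form gam Hgeo) as [Q [HD Hg]].
  destruct (inf_stab gam Hinf nil) as [h1 [S1 _]].
  destruct (inf_stab gam Hinf (h1::nil)) as [h2 [S2 N2]].
  destruct (inf_stab gam Hinf (h1::h2::nil)) as [h3 [S3 N3]].
  destruct (stab_lam gam Q h1 Hg HD S1) as [l1 [L1 E1]].
  destruct (stab_lam gam Q h2 Hg HD S2) as [l2 [L2 E2]].
  destruct (stab_lam gam Q h3 Hg HD S3) as [l3 [L3 E3]].
  assert (l1 = l2 \/ l1 = l3 \/ l2 = l3) as [H|[H|H]].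
  { assert (l1 = 1 \/ l1 = -1) by nra. assert (l2 = 1 \/ l2 = -1) by nra. assert (l3 = 1 \/ l3 = -1) by nra. lra. }
  - subst. apply (pair_form gam Q h1 h2 l2); auto. apply N2; simpl; auto.
  - subst. apply (pair_form gam Q h1 h3 l3); auto. apply N3; simpl; auto.
  - subst. apply (pair_form gam Q h2 h3 l3); auto. apply N3; simpl; auto.
Qed.

Definition FZ (A B C : Z) := mkF (IZR A) (IZR B) (IZR C).

Lemma T_IZR A B C a b c d : exists A' B' C', T (FZ A B C) (IZR a) (IZR b) (IZR c) (IZR d) = FZ A' B' C'.
Proof. exists (A*a*a + B*a*c + C*c*c)%Z, (2*A*a*b + B*(a*d+b*c) + 2*C*c*d)%Z, (A*b*b + B*b*d + C*d*d)%Z.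
  unfold FZ, T; apply form_eq; cbn [fA fB fC]; repeat rewrite ?plus_IZR, ?mult_IZR; ring. Qed.

Lemma Tg_IZR A B C g : exists A' B' C', Tg (FZ A B C) g = FZ A' B' C'.
Proof. apply T_IZR. Qed.

Lemma dsc_IZR A B C : dsc (FZ A B C) = IZR (B*B - 4*A*C).
Proof. unfold dsc, FZ; cbn [fA fB fC]. rewrite minus_IZR, !mult_IZR. reflexivity. Qed.

Lemma dsc_Tg Q g : dsc (Tg Q g) = dsc Q.
Proof. unfold Tg. rewrite dsc_T, detR. ring. Qed.

Lemma Zgood_pos gam A B C t : Zgood gam A B C t -> 0 < dsc (FZ A B C).
Proof. intros [_ [Ht E]]. rewrite dsc_IZR, E. apply IZR_lt. nia. Qed.

Lemma transport Gam gam0 g g' gam gam' A B C t :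
  Gam gam -> Zgood gam A B C t -> gam = img (moeb g) gam0 -> gam' = img (moeb g') gam0 ->
  (exists A' B' C' t', Zgood gam' A' B' C' t') ->
  exists A'' B'' C'', Zgood gam' A'' B'' C'' t.
Proof. intros _ HG E1 E2 [A' [B' [C' [t' HG']]]].
  set (F := FZ A B C).
  assert (H0: forall q, gam0 q -> gs (Tg F g) q).
  { intros q Hq. assert (Hm: gam (moeb g q)) by (rewrite E1; exists q; auto).
    apply (proj1 HG) in Hm. fold F in Hm. apply moeb_gs; auto.
    apply (moeb_H_rev g). apply Hm. }
  destruct (Tg_IZR A B C g) as [A1 [B1 [C1 E3]]]. fold F in E3.
  destruct (Tg_IZR A1 B1 C1 (inv g')) as [A2 [B2 [C2 E4]]].
  set (F' := Tg (Tg F g) (inv g')).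
  assert (H1: forall p, gam' p -> gs F' p).
  { intros p Hp. rewrite E2 in Hp. destruct Hp as [q [Hq ->]]. specialize (H0 q Hq).
    apply moeb_gs. { apply H0. } unfold F'. rewrite Tg_inv. exact H0. }
  assert (HdF': dsc F' = dsc F) by (unfold F'; rewrite !dsc_Tg; reflexivity).
  assert (HFp: 0 < dsc F) by (apply (Zgood_pos gam A B C t); auto).
  assert (HGp := Zgood_pos _ _ _ _ _ HG').
  destruct (gs_incl_scal (FZ A' B' C') F' HGp) as [l Hl].
  { intros p Hp. apply H1. apply (proj1 HG'). exact Hp. }
  assert (Hl0: l <> 0). { intro E. rewrite E in Hl. rewrite Hl, dsc_scal in HdF'. lra. }
  exists A2, B2, C2. destruct HG as [_ [Ht Et]]. split; [|split]; auto.
  - intro p. change (gam' p <-> gs (FZ A2 B2 C2) p). rewrite <- E4, <- E3. fold F'. rewrite Hl, gs_scal; auto. apply (proj1 HG').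
  - apply eq_IZR. rewrite <- dsc_IZR, <- E4, <- E3. fold F'. rewrite HdF'. unfold F. rewrite dsc_IZR, Et. reflexivity.
Qed.

Lemma orbit_bound Gam : modular_pattern Gam ->
  exists N : Z, forall gam, Gam gam -> exists A B C t, Zgood gam A B C t /\ (t*t - 4 <= N)%Z.
Proof. intros [Hgeo [Hinv [[L HL] Hinf]]].
  assert (Hown: forall gam, Gam gam -> exists A B C t, Zgood gam A B C t).
  { intros gam Hg. apply stab_form; auto. }
  assert (Hel: forall gam0, exists N0 : Z, forall g gam, Gam gam -> gam = img (moeb g) gam0 ->
              exists A B C t, Zgood gam A B C t /\ (t*t - 4 <= N0)%Z).
  { intro gam0. destruct (classic (exists g gam, Gam gam /\ gam = img (moeb g) gam0)) as [[g [gam [Hg E]]]|Hn].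
    - destruct (Hown gam Hg) as [A [B [C [t HG]]]]. exists (t*t-4)%Z. intros g' gam' Hg' E'.
      destruct (transport Gam gam0 g g' gam gam' A B C t Hg HG E E' (Hown gam' Hg')) as [A2 [B2 [C2 H2]]].
      exists A2, B2, C2, t. split; auto. lia.
    - exists 0%Z. intros g gam Hg E. exfalso. apply Hn. exists g, gam. auto. }
  assert (Hl: forall L', exists N, forall gam0, In gam0 L' -> forall g gam, Gam gam -> gam = img (moeb g) gam0 ->
              exists A B C t, Zgood gam A B C t /\ (t*t - 4 <= N)%Z).
  { induction L' as [|x L' IH].
    - exists 0%Z. intros gam0 [].
    - destruct IH as [N IH]. destruct (Hel x) as [N0 H0]. exists (Z.max N N0).
      intros gam0 [<-|Hin] g gam Hg E.
      + destruct (H0 g gam Hg E) as [A [B [C [t [HG Ht]]]]]. exists A, B, C, t. split; auto. lia.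
      + destruct (IH gam0 Hin g gam Hg E) as [A [B [C [t [HG Ht]]]]]. exists A, B, C, t. split; auto. lia. }
  destruct (Hl L) as [N HN]. exists N. intros gam Hg.
  destruct (HL gam Hg) as [gam0 [g [Hin E]]]. apply (HN gam0 Hin g gam Hg E).
Qed.

Definition raZ r := match r with Ref1 => (-1)%Z | Ref2 => (-1)%Z | Ref3 => 1%Z end.
Definition rbZ r := match r with Ref1 => 0%Z | Ref2 => 2%Z | Ref3 => 0%Z end.
Definition rcZ r := match r with Ref1 => 0%Z | Ref2 => 0%Z | Ref3 => 2%Z end.
Definition rdZ r := match r with Ref1 => 1%Z | Ref2 => 1%Z | Ref3 => (-1)%Z end.
Definition Tr Q r := T Q (IZR (raZ r)) (IZR (rbZ r)) (IZR (rcZ r)) (IZR (rdZ r)).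

Lemma q_pos x y : 0 < y -> 0 < (x - /2) * (x - /2) + y * y.
Proof. intros Hy. apply Rplus_le_lt_0_compat. apply Rle_0_sqr. apply Rmult_lt_0_compat; auto. Qed.

Lemma refl_K r Q x y : 0 < y -> exists den, 0 < den /\
  den * K Q (fst (refl r (x,y))) (snd (refl r (x,y))) = K (Tr Q r) x y.
Proof. intros Hy. destruct Q as [A B C]. destruct r; unfold Tr, K, T; simpl.
  - exists 1. split; [lra|]. ring.
  - exists 1. split; [lra|]. ring.
  - set (q := (x - /2) * (x - /2) + y * y).
    assert (Hq: 0 < q) by (unfold q; apply q_pos; auto).
    exists (4*q). split; [lra|]. unfold q. field. unfold q in Hq; lra.
Qed.

Lemma refl_H r x y : 0 < y -> 0 < snd (refl r (x,y)).
Proof. intros Hy. destruct r; simpl; auto.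
  assert (0 < (x - /2) * (x - /2) + y * y) by (apply q_pos; auto). apply Rdiv_lt_0_compat; lra. Qed.

Lemma aux_inv u y q : q = u*u+y*y -> q <> 0 ->
  4 * ((/ 2 + u / (4 * q) - / 2) * (/ 2 + u / (4 * q) - / 2) + y / (4 * q) * (y / (4 * q))) = /(4*q).
Proof. intros Hq H0. transitivity ((u*u+y*y)/(4*q*q)). { field; auto. } rewrite <- Hq. field; auto. Qed.

Lemma refl_inv r x y : 0 < y -> refl r (refl r (x,y)) = (x,y).
Proof. intros Hy. destruct r; simpl.
  - f_equal; ring.
  - f_equal; ring.
  - assert (Hq: 0 < (x - /2) * (x - /2) + y * y) by (apply q_pos; auto).
    set (q := (x - /2) * (x - /2) + y * y) in *.
    rewrite (aux_inv (x - /2) y q); [|reflexivity|lra].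
    f_equal; field; lra.
Qed.

Lemma refl_gs r Q p : inH p -> (gs Q (refl r p) <-> gs (Tr Q r) p).
Proof. destruct p as [x y]; unfold inH, gs; simpl fst; simpl snd; intros Hy.
  destruct (refl_K r Q x y Hy) as [den [Hd E]].
  pose proof (refl_H r x y Hy).
  split; intros [_ H2].
  - split; auto. simpl. rewrite <- E, H2. ring.
  - split; auto. simpl in H2. rewrite <- E in H2. apply Rmult_integral in H2. destruct H2; auto. lra.
Qed.

Definition FaZ (p1 q1 p2 q2 : Z) : form := mkF (IZR (q1*q2)) (IZR (-(p1*q2+q1*p2))) (IZR (p1*p2)).

Lemma Tr_Fa r p1 q1 p2 q2 : Tr (FaZ p1 q1 p2 q2) r =
  FaZ (raZ r * p1 + rbZ r * q1) (rcZ r * p1 + rdZ r * q1) (raZ r * p2 + rbZ r * q2) (rcZ r * p2 + rdZ r * q2).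
Proof. unfold Tr, FaZ, T. apply form_eq; cbn [fA fB fC]; repeat rewrite ?plus_IZR, ?mult_IZR, ?opp_IZR;
  destruct r; simpl; ring. Qed.

Definition Fdet (p1 q1 p2 q2 : Z) := (p1*q2 - q1*p2 = 1 \/ p1*q2 - q1*p2 = -1)%Z.

Lemma edge_form w (s : region) : (s = side1 \/ s = side2 \/ s = side3) ->
  exists p1 q1 p2 q2, Fdet p1 q1 p2 q2 /\ forall p, img (word_act w) s p <-> gs (FaZ p1 q1 p2 q2) p.
Proof. intros Hs. induction w as [|r w IH].
  - destruct Hs as [Hs|[Hs|Hs]]; subst s.
    + exists 0%Z, 1%Z, 1%Z, 0%Z. split. { unfold Fdet; lia. }
      intros [x y]. unfold img, side1, vgeod, gs, K, FaZ, inH; simpl. split.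
      * intros [[x' y'] [[H1 H2] E]]. injection E; intros; subst. simpl in *. split; auto. lra.
      * intros [H1 H2]. exists (x,y). split; auto. simpl. split; auto. lra.
    + exists 1%Z, 1%Z, 1%Z, 0%Z. split. { unfold Fdet; lia. }
      intros [x y]. unfold img, side2, vgeod, gs, K, FaZ, inH; simpl. split.
      * intros [[x' y'] [[H1 H2] E]]. injection E; intros; subst. simpl in *. split; auto. lra.
      * intros [H1 H2]. exists (x,y). split; auto. simpl. split; auto. lra.
    + exists 0%Z, 1%Z, 1%Z, 1%Z. split. { unfold Fdet; lia. }
      intros [x y]. unfold img, side3, cgeod, gs, K, FaZ, inH; simpl. split.
      * intros [[x' y'] [[H1 H2] E]]. injection E; intros; subst. simpl in *. split; auto. lra.
      * intros [H1 H2]. exists (x,y). split; auto. simpl. split; auto. lra.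
  - destruct IH as [p1 [q1 [p2 [q2 [Hd IH]]]]].
    exists (raZ r * p1 + rbZ r * q1)%Z, (rcZ r * p1 + rdZ r * q1)%Z, (raZ r * p2 + rbZ r * q2)%Z, (rcZ r * p2 + rdZ r * q2)%Z.
    split. { unfold Fdet in *.
      assert (Ei: ((raZ r * p1 + rbZ r * q1) * (rcZ r * p2 + rdZ r * q2) - (rcZ r * p1 + rdZ r * q1) * (raZ r * p2 + rbZ r * q2)
        = (raZ r * rdZ r - rbZ r * rcZ r) * (p1*q2 - q1*p2))%Z) by ring.
      rewrite Ei. destruct r; cbn [raZ rbZ rcZ rdZ]; lia. }
    intros p. rewrite <- Tr_Fa. split.
    + intros [q [Hq ->]]. simpl.
      assert (HX: gs (FaZ p1 q1 p2 q2) (word_act w q)) by (apply IH; exists q; auto).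
      destruct (word_act w q) as [x y] eqn:EX. destruct HX as [HH _]. unfold inH in HH; simpl in HH.
      apply (refl_gs r _ (refl r (x,y)) (refl_H r x y HH)).
      rewrite refl_inv; auto. rewrite <- EX in *. apply IH. exists q; auto.
    + intros HP. destruct p as [x y]. assert (Hy: 0 < y) by apply HP.
      apply (refl_gs r) in HP; [|exact Hy].
      apply IH in HP. destruct HP as [q [Hq EQ]]. exists q. split; auto. simpl. rewrite <- EQ.
      rewrite refl_inv; auto.
Qed.

Lemma K_Fa p1 q1 p2 q2 x y : K (FaZ p1 q1 p2 q2) x y =
  (IZR q1 * x - IZR p1) * (IZR q2 * x - IZR p2) + IZR q1 * IZR q2 * (y*y).
Proof. unfold K, FaZ; cbn [fA fB fC]. repeat rewrite ?opp_IZR, ?plus_IZR, ?mult_IZR. ring. Qed.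

Lemma Fa_neg p1 q1 p2 q2 x y : K (FaZ (-p1) (-q1) p2 q2) x y = - K (FaZ p1 q1 p2 q2) x y.
Proof. rewrite !K_Fa, !opp_IZR. ring. Qed.
Lemma Fa_swap p1 q1 p2 q2 x y : K (FaZ p2 q2 p1 q1) x y = K (FaZ p1 q1 p2 q2) x y.
Proof. rewrite !K_Fa. ring. Qed.

Definition c0x := /2.
Definition c0y := sqrt 3 / 2.
Lemma c0yy : c0y * c0y = 3/4.
Proof. unfold c0y. replace (sqrt 3 / 2 * (sqrt 3 / 2)) with ((sqrt 3 * sqrt 3)/4) by field.
  rewrite sqrt_sqrt; lra. Qed.
Lemma c0y_pos : 0 < c0y.
Proof. unfold c0y. apply Rdiv_lt_0_compat; [apply sqrt_lt_R0|]; lra. Qed.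

Definition D0 (x y : R) := 0 < y /\ 0 <= x <= 1 /\ (x - /2) * (x - /2) + y * y >= /4.

Definition Sgood (Q : form) := exists s, (s = 1 \/ s = -1) /\
   (forall x y, D0 x y -> 0 <= s * K Q x y) /\ 0 < s * K Q c0x c0y.

Lemma core_a p1 p2 : (p1 = 1 \/ p1 = -1)%Z -> Sgood (FaZ p1 0 p2 1).
Proof. intros Hp. pose proof c0yy as Hc0.
  assert (Hk: forall x y, K (FaZ p1 0 p2 1) x y = - IZR p1 * (x - IZR p2)).
  { intros. rewrite K_Fa. simpl. ring. }
  assert (Hp': IZR p1 = 1 \/ IZR p1 = -1) by (destruct Hp as [->| ->]; [left|right]; reflexivity).
  destruct (Z_le_gt_dec p2 0) as [H|H].
  - apply IZR_le in H. exists (- IZR p1). split; [lra|]. split.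
    + intros x y [_ [Hx _]]. rewrite Hk. destruct Hp' as [E|E]; rewrite E; nra.
    + rewrite Hk. unfold c0x. destruct Hp' as [E|E]; rewrite E; nra.
  - assert (H': (1 <= p2)%Z) by lia. apply IZR_le in H'. exists (IZR p1). split; [lra|]. split.
    + intros x y [_ [Hx _]]. rewrite Hk. destruct Hp' as [E|E]; rewrite E; nra.
    + rewrite Hk. unfold c0x. destruct Hp' as [E|E]; rewrite E; nra.
Qed.

Lemma Sgood_swap p1 q1 p2 q2 : Sgood (FaZ p1 q1 p2 q2) -> Sgood (FaZ p2 q2 p1 q1).
Proof. intros [s [Hs [H1 H2]]]. exists s. split; auto. split.
  - intros x y Hd. rewrite Fa_swap. auto.
  - rewrite Fa_swap. auto. Qed.

Lemma Sgood_neg p1 q1 p2 q2 : Sgood (FaZ p1 q1 p2 q2) -> Sgood (FaZ (-p1) (-q1) p2 q2).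
Proof. intros [s [Hs [H1 H2]]]. exists (-s). split; [lra|]. split.
  - intros x y Hd. rewrite Fa_neg. specialize (H1 x y Hd). lra.
  - rewrite Fa_neg. lra. Qed.

Lemma core_c p1 q1 p2 q2 : (1 <= q1)%Z -> (1 <= q2)%Z -> Fdet p1 q1 p2 q2 -> Sgood (FaZ p1 q1 p2 q2).
Proof. intros Hq1 Hq2 Hd. unfold Fdet in Hd.
  assert (Hc: ((p1 <= 0 /\ p2 <= 0) \/ (q1 <= p1 /\ q2 <= p2) \/ (0 <= p1 <= q1 /\ 0 <= p2 <= q2))%Z).
  { destruct (Z_le_gt_dec p1 0); destruct (Z_le_gt_dec p2 0); destruct (Z_le_gt_dec q1 p1); destruct (Z_le_gt_dec q2 p2); try lia.
    all: try nia. }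
  apply IZR_le in Hq1; apply IZR_le in Hq2. pose proof c0yy as Hc0.
  exists 1. split; [lra|]. setoid_rewrite K_Fa. unfold c0x.
  set (P1 := IZR p1) in *; set (P2 := IZR p2) in *; set (Q1 := IZR q1) in *; set (Q2 := IZR q2) in *.
  assert (HQ: 1 <= Q1 * Q2) by nra.
  destruct Hc as [[H1 H2]|[[H1 H2]|[[H1 H1'] [H2 H2']]]].
  - apply IZR_le in H1; apply IZR_le in H2. fold P1 P2 Q1 Q2 in H1, H2. split.
    + intros x y [Hy [Hx _]]. assert (0 <= Q1 * x - P1) by nra. assert (0 <= Q2 * x - P2) by nra.
      assert (0 <= (Q1*x-P1)*(Q2*x-P2)) by (apply Rmult_le_pos; auto).
      assert (0 <= Q1*Q2*(y*y)) by (apply Rmult_le_pos; [lra | apply Rle_0_sqr]). lra.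
    + assert (0 < Q1 * /2 - P1) by nra. assert (0 < Q2 * /2 - P2) by nra.
      assert (0 < (Q1*/2-P1)*(Q2*/2-P2)) by (apply Rmult_lt_0_compat; auto).
      assert (0 <= Q1*Q2*(c0y*c0y)) by (apply Rmult_le_pos; [lra | apply Rle_0_sqr]). lra.
  - apply IZR_le in H1; apply IZR_le in H2. fold P1 P2 Q1 Q2 in H1, H2. split.
    + intros x y [Hy [Hx _]]. assert (0 <= Q1 - Q1*x) by (replace (Q1 - Q1*x) with (Q1*(1-x)) by ring; apply Rmult_le_pos; lra).
      assert (0 <= Q2 - Q2*x) by (replace (Q2 - Q2*x) with (Q2*(1-x)) by ring; apply Rmult_le_pos; lra).
      assert (0 <= (P1-Q1*x)*(P2-Q2*x)) by (apply Rmult_le_pos; lra).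
      assert (0 <= Q1*Q2*(y*y)) by (apply Rmult_le_pos; [lra | apply Rle_0_sqr]).
      replace ((Q1*x-P1)*(Q2*x-P2)) with ((P1-Q1*x)*(P2-Q2*x)) by ring. lra.
    + assert (Q1 * /2 - P1 < 0) by nra. assert (Q2 * /2 - P2 < 0) by nra.
      assert (0 < (P1-Q1*/2)*(P2-Q2*/2)) by (apply Rmult_lt_0_compat; lra).
      assert (0 <= Q1*Q2*(c0y*c0y)) by (apply Rmult_le_pos; [lra | apply Rle_0_sqr]).
      replace ((Q1*/2-P1)*(Q2*/2-P2)) with ((P1-Q1*/2)*(P2-Q2*/2)) by ring. lra.
  - apply IZR_le in H1; apply IZR_le in H2; apply IZR_le in H1'; apply IZR_le in H2'.
    fold P1 P2 Q1 Q2 in H1, H2, H1', H2'. split.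
    + intros x y [Hy [Hx Hc]].
      assert (Hyy: Q1*Q2*(y*y) >= Q1*Q2*(x - x*x)) by (apply Rle_ge, Rmult_le_compat_l; nra).
      assert (E: (Q1 * x - P1) * (Q2 * x - P2) + Q1*Q2*(x - x*x) = x*((Q1-P1)*(Q2-P2)) + (1-x)*(P1*P2)) by ring.
      assert (0 <= x*((Q1-P1)*(Q2-P2))) by (apply Rmult_le_pos; [lra| apply Rmult_le_pos; lra]).
      assert (0 <= (1-x)*(P1*P2)) by (apply Rmult_le_pos; [lra| apply Rmult_le_pos; lra]).
      lra.
    + assert (E: (Q1 * /2 - P1) * (Q2 * /2 - P2) + Q1*Q2*(3/4) = /2*((Q1-P1)*(Q2-P2)) + /2*(P1*P2) + Q1*Q2/2) by field.
      assert (0 <= (Q1-P1)*(Q2-P2)) by (apply Rmult_le_pos; lra). assert (0 <= P1*P2) by (apply Rmult_le_pos; lra).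
      rewrite Hc0. lra.
Qed.

Lemma unit_aux p q : (0 <= q)%Z -> (p*q = 1 \/ p*q = -1)%Z -> (q = 1 /\ (p = 1 \/ p = -1))%Z.
Proof. intros Hq H.
  destruct (Z.eq_dec q 0) as [->|Hq0]; [lia|].
  destruct (Z.eq_dec q 1) as [->|Hq1]; [lia|].
  exfalso. assert (2 <= q)%Z by lia.
  destruct (Z_le_gt_dec p 0); [destruct (Z.eq_dec p 0); [subst; lia|]|]; nia.
Qed.

Lemma base_good p1 q1 p2 q2 : Fdet p1 q1 p2 q2 -> Sgood (FaZ p1 q1 p2 q2).
Proof.
  assert (Hpos: forall p1 q1 p2 q2, (0 <= q1)%Z -> (0 <= q2)%Z -> Fdet p1 q1 p2 q2 -> Sgood (FaZ p1 q1 p2 q2)).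
  { clear. intros p1 q1 p2 q2 H1 H2 Hd.
    destruct (Z.eq_dec q1 0) as [E1|E1]; [|destruct (Z.eq_dec q2 0) as [E2|E2]].
    - subst q1. unfold Fdet in Hd. destruct (unit_aux p1 q2) as [-> Hp]; [lia|lia|]. apply core_a. auto.
    - subst q2. unfold Fdet in Hd. destruct (unit_aux p2 q1) as [-> Hp]; [lia|lia|]. apply Sgood_swap. apply core_a. auto.
    - apply core_c; auto; lia. }
  intros Hd. destruct (Z_le_gt_dec 0 q1); destruct (Z_le_gt_dec 0 q2).
  - apply Hpos; auto.
  - apply Sgood_swap. rewrite <- (Z.opp_involutive p2), <- (Z.opp_involutive q2). apply Sgood_neg.
    apply Sgood_swap. apply Hpos; try lia. unfold Fdet in *. lia.
  - rewrite <- (Z.opp_involutive p1), <- (Z.opp_involutive q1). apply Sgood_neg.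
    apply Hpos; try lia. unfold Fdet in *. lia.
  - rewrite <- (Z.opp_involutive p1), <- (Z.opp_involutive q1). apply Sgood_neg.
    apply Sgood_swap. rewrite <- (Z.opp_involutive p2), <- (Z.opp_involutive q2). apply Sgood_neg.
    apply Sgood_swap. apply Hpos; try lia. unfold Fdet in *. lia.
Qed.

Definition Kp Q (p : pt) := K Q (fst p) (snd p).

Lemma word_H w q : inH q -> inH (word_act w q).
Proof. induction w as [|r w IH]; simpl; auto. intros Hq. specialize (IH Hq).
  destruct (word_act w q) as [x y]. apply refl_H. exact IH. Qed.

Lemma center_H : inH center0.
Proof. unfold inH, center0; simpl. apply c0y_pos. Qed.

Lemma tile_side w : forall p1 q1 p2 q2, Fdet p1 q1 p2 q2 -> forall q, Delta0 q ->
  Kp (FaZ p1 q1 p2 q2) (word_act w q) * Kp (FaZ p1 q1 p2 q2) (word_act w center0) >= 0 /\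
  Kp (FaZ p1 q1 p2 q2) (word_act w center0) <> 0.
Proof. induction w as [|r w IH]; intros p1 q1 p2 q2 Hd q Hq.
  - destruct (base_good p1 q1 p2 q2 Hd) as [s [Hs [H1 H2]]]. simpl.
    destruct q as [x y]. unfold Kp, center0; simpl.
    assert (HD: D0 x y) by (exact Hq). specialize (H1 x y HD). fold c0x c0y.
    split.
    + destruct Hs as [->| ->]; nra.
    + intro E. rewrite E in H2. lra.
  - simpl. assert (Hq' : inH (word_act w q)) by (apply word_H; apply Hq).
    assert (Hc' : inH (word_act w center0)) by (apply word_H; apply center_H).
    destruct (word_act w q) as [x y] eqn:E1. destruct (word_act w center0) as [x' y'] eqn:E2.
    destruct (refl_K r (FaZ p1 q1 p2 q2) x y Hq') as [d1 [Hd1 K1]].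
    destruct (refl_K r (FaZ p1 q1 p2 q2) x' y' Hc') as [d2 [Hd2 K2]].
    rewrite Tr_Fa in K1, K2.
    assert (Hd' : Fdet (raZ r * p1 + rbZ r * q1) (rcZ r * p1 + rdZ r * q1) (raZ r * p2 + rbZ r * q2) (rcZ r * p2 + rdZ r * q2)).
    { unfold Fdet in *.
      assert (Ei: ((raZ r * p1 + rbZ r * q1) * (rcZ r * p2 + rdZ r * q2) - (rcZ r * p1 + rdZ r * q1) * (raZ r * p2 + rbZ r * q2)
        = (raZ r * rdZ r - rbZ r * rcZ r) * (p1*q2 - q1*p2))%Z) by ring.
      rewrite Ei. destruct r; cbn [raZ rbZ rcZ rdZ]; lia. }
    destruct (IH _ _ _ _ Hd' q Hq) as [I1 I2]. rewrite E1 in I1. unfold Kp in *; simpl in I1, I2.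
    rewrite <- K1, <- K2 in I1. rewrite <- K2 in I2.
    split.
    + assert (0 < d1*d2) by (apply Rmult_lt_0_compat; auto).
      set (u := K (FaZ p1 q1 p2 q2) (fst (refl r (x, y))) (snd (refl r (x, y)))) in *.
      set (v := K (FaZ p1 q1 p2 q2) (fst (refl r (x', y'))) (snd (refl r (x', y')))) in *.
      replace (d1 * u * (d2 * v)) with ((d1*d2)*(u*v)) in I1 by ring.
      destruct (Rle_lt_dec 0 (u*v)); [lra|]. exfalso. nra.
    + intro E. rewrite E in I2. apply I2. ring.
Qed.

Lemma Rmult_le_0_l_neg a b : 0 <= a -> b <= 0 -> a * b <= 0.
Proof. intros. assert (0 <= a * (-b)) by (apply Rmult_le_pos; lra). lra. Qed.

Lemma seg_sign Q c1 c2 p : 0 < snd c1 -> 0 < snd c2 -> hseg c1 c2 p -> Kp Q p = 0 ->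
  Kp Q c1 <> 0 -> Kp Q c2 <> 0 -> Kp Q c1 * Kp Q c2 < 0.
Proof. destruct c1 as [x1 y1], c2 as [x2 y2], p as [x y], Q as [A B C]. unfold hseg, Kp, K; simpl.
  intros Hy1 Hy2 [Hy [[Ex [Ex' Hr]]|[Hne [t [E1 [E2 Hr]]]]]] Hp H1 H2.
  - subst x2 x. assert (Hb: (y*y - y1*y1)*(y*y - y2*y2) <= 0).
    { destruct (Rle_dec y1 y2) as [Hl|Hl].
      - rewrite Rmin_left, Rmax_right in Hr by lra.
        assert (0 <= y*y - y1*y1) by nra. assert (y*y - y2*y2 <= 0) by nra. nra.
      - rewrite Rmin_right, Rmax_left in Hr by lra.
        assert (y*y - y1*y1 <= 0) by nra. assert (0 <= y*y - y2*y2) by nra. nra. }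
    assert (E1: A * (x1 * x1 + y1 * y1) + B * x1 + C = A*(y1*y1 - y*y)) by lra.
    assert (E2: A * (x1 * x1 + y2 * y2) + B * x1 + C = A*(y2*y2 - y*y)) by lra.
    rewrite E1, E2 in *.
    assert (0 <= A*A) by nra.
    assert (E3: A * (y1 * y1 - y * y) * (A * (y2 * y2 - y * y)) = (A*A)*((y*y - y1*y1)*(y*y - y2*y2))) by ring.
    rewrite E3. assert (HH: (A*A)*((y*y - y1*y1)*(y*y - y2*y2)) <= 0).
    { apply Rmult_le_0_l_neg; auto. } 
    destruct (Req_dec ((A*A)*((y*y - y1*y1)*(y*y - y2*y2))) 0) as [Z|Z]; [|lra].
    exfalso. rewrite <- E3 in Z. apply Rmult_integral in Z. destruct Z; auto.
  - set (R2 := (x1 - t) * (x1 - t) + y1 * y1) in *.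
    assert (L: forall u v, (u - t)*(u - t) + v*v = R2 -> A * (u * u + v * v) + B * u + C = (2*A*t + B)*u + (A*(R2 - t*t) + C)).
    { intros u v Huv. replace (u*u + v*v) with (R2 - t*t + 2*t*u) by lra. ring. }
    rewrite (L x y E2) in Hp. rewrite (L x1 y1 eq_refl) in H1 |- *. rewrite (L x2 y2 (eq_sym E1)) in H2 |- *.
    set (m := 2*A*t + B) in *. set (n := A*(R2 - t*t) + C) in *.
    assert (En: n = - m * x) by lra. rewrite En in *.
    assert (E3: (m * x1 + - m * x) * (m * x2 + - m * x) = (m*m)*((x1 - x)*(x2 - x))) by ring.
    rewrite E3 in *.
    assert (Hb: (x1 - x)*(x2 - x) <= 0).
    { destruct (Rle_dec x1 x2) as [Hl|Hl].
      - rewrite Rmin_left, Rmax_right in Hr by lra. nra.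
      - rewrite Rmin_right, Rmax_left in Hr by lra. nra. }
    assert (0 <= m*m) by nra.
    assert (HH: (m*m)*((x1 - x)*(x2 - x)) <= 0) by (apply Rmult_le_0_l_neg; auto).
    destruct (Req_dec ((m*m)*((x1 - x)*(x2 - x))) 0) as [Z|Z]; [|lra].
    exfalso. apply Rmult_integral in Z. destruct Z as [Z|Z].
    + apply Rmult_integral in Z. destruct Z as [Z|Z]; subst; apply H1; rewrite Z; ring.
    + apply Rmult_integral in Z. destruct Z as [Z|Z].
      * apply H1. replace x1 with x by lra. ring.
      * apply H2. replace x2 with x by lra. ring.
Qed.

Lemma affine_zero l1 l2 : l1 * l2 <= 0 -> exists lam, 0 <= lam <= 1 /\ lam*l1 + (1-lam)*l2 = 0.
Proof. intros H. destruct (Req_dec l1 l2) as [E|E].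
  - subst. exists 1. split; [lra|]. nra.
  - assert (Hd: l2 - l1 <> 0) by lra. exists (l2 / (l2 - l1)). split.
    + destruct (Rlt_dec l1 l2) as [Hlt|Hlt].
      * assert (l1 <= 0 /\ 0 <= l2) as [A1 A2] by nra. split.
        -- unfold Rdiv; apply Rmult_le_pos; [lra| left; apply Rinv_0_lt_compat; lra].
        -- apply Rmult_le_reg_r with (l2 - l1); [lra|]. unfold Rdiv; rewrite Rmult_assoc, Rinv_l; lra.
      * assert (l2 <= 0 /\ 0 <= l1) as [A1 A2] by nra.
        replace (l2 / (l2 - l1)) with ((-l2) / (l1 - l2)) by (field; lra). split.
        -- unfold Rdiv; apply Rmult_le_pos; [lra| left; apply Rinv_0_lt_compat; lra].
        -- apply Rmult_le_reg_r with (l1 - l2); [lra|]. unfold Rdiv; rewrite Rmult_assoc, Rinv_l; lra.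
    + field. auto.
Qed.

Lemma cross_point (G Fa : form) P1 P2 : fA G <> 0 -> gs G P1 -> gs G P2 -> Kp Fa P1 * Kp Fa P2 <= 0 ->
  exists P, gs G P /\ Kp Fa P = 0.
Proof. destruct G as [A B C], Fa as [a b c], P1 as [x1 y1], P2 as [x2 y2].
  unfold gs, Kp, K, inH; simpl. intros HA [Hy1 G1] [Hy2 G2] Hs.
  set (l := fun x => (A*b - a*B)*x + (A*c - a*C)).
  assert (Hl: forall x y, A * (a * (x * x + y * y) + b * x + c) - a * (A * (x * x + y * y) + B * x + C) = l x)
    by (intros; unfold l; ring).
  assert (L1: l x1 = A * (a * (x1 * x1 + y1 * y1) + b * x1 + c)) by (rewrite <- (Hl x1 y1), G1; ring).
  assert (L2: l x2 = A * (a * (x2 * x2 + y2 * y2) + b * x2 + c)) by (rewrite <- (Hl x2 y2), G2; ring).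
  assert (Hll: l x1 * l x2 <= 0).
  { rewrite L1, L2. replace (A * (a * (x1 * x1 + y1 * y1) + b * x1 + c) * (A * (a * (x2 * x2 + y2 * y2) + b * x2 + c)))
      with ((A*A) * ((a * (x1 * x1 + y1 * y1) + b * x1 + c) * (a * (x2 * x2 + y2 * y2) + b * x2 + c))) by ring.
    apply Rmult_le_0_l_neg; auto. apply Rle_0_sqr. }
  destruct (affine_zero _ _ Hll) as [lam [Hlam Hz]].
  set (x0 := lam*x1 + (1-lam)*x2).
  assert (Hx0: l x0 = 0) by (rewrite <- Hz; unfold x0, l; ring).
  set (f := fun x => A*x*x + B*x + C).
  assert (F1: A * f x1 = - (A*A)*(y1*y1)) by (unfold f; nra).
  assert (F2: A * f x2 = - (A*A)*(y2*y2)) by (unfold f; nra).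
  assert (Fc: A * f x0 = lam * (A * f x1) + (1-lam) * (A * f x2) - lam*(1-lam)*(A*A)*((x1-x2)*(x1-x2)))
    by (unfold f, x0; ring).
  assert (HAA: 0 < A*A) by (apply Rsqr_pos_lt; auto).
  assert (Hneg: A * f x0 < 0).
  { rewrite Fc, F1, F2.
    assert (0 < y1*y1) by (apply Rmult_lt_0_compat; auto).
    assert (0 < y2*y2) by (apply Rmult_lt_0_compat; auto).
    assert (0 < lam * ((A*A)*(y1*y1)) + (1-lam) * ((A*A)*(y2*y2))).
    { destruct (Req_dec lam 0) as [E|E].
      - rewrite E. assert (0 < (A*A)*(y2*y2)) by (apply Rmult_lt_0_compat; auto). lra.
      - assert (0 < lam) by lra. assert (0 < lam * ((A*A)*(y1*y1))) by (apply Rmult_lt_0_compat; auto; apply Rmult_lt_0_compat; auto).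
        assert (0 <= (1-lam) * ((A*A)*(y2*y2))) by (apply Rmult_le_pos; [lra|]; apply Rmult_le_pos; lra). lra. }
    assert (0 <= lam*(1-lam)*(A*A)*((x1-x2)*(x1-x2))).
    { apply Rmult_le_pos; [|apply Rle_0_sqr]. apply Rmult_le_pos; [|lra]. apply Rmult_le_pos; lra. }
    lra. }
  set (y0 := sqrt (- f x0 / A)).
  assert (Hpos: 0 < - f x0 / A).
  { replace (- f x0 / A) with (- (A * f x0) / (A*A)) by (field; auto).
    apply Rdiv_lt_0_compat; lra. }
  assert (Hy0: 0 < y0) by (apply sqrt_lt_R0; auto).
  assert (Hyy: y0 * y0 = - f x0 / A) by (apply sqrt_sqrt; lra).
  assert (HG: A * (x0 * x0 + y0 * y0) + B * x0 + C = 0).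
  { replace (A * (x0 * x0 + y0 * y0) + B * x0 + C) with (f x0 + A*(y0*y0)) by (unfold f; ring).
    rewrite Hyy. field. auto. }
  exists (x0, y0). simpl. split; [split; auto|].
  assert (E := Hl x0 y0). rewrite HG, Hx0 in E.
  apply (Rmult_eq_reg_l A); auto. lra.
Qed.

Definition bin (Q : form) p q := fA Q*p*p + fB Q*p*q + fC Q*q*q.

Lemma bin_sign (G : form) p1 q1 p2 q2 P : Fdet p1 q1 p2 q2 -> gs G P -> Kp (FaZ p1 q1 p2 q2) P = 0 ->
  bin G (IZR p1) (IZR q1) * bin G (IZR p2) (IZR q2) <= 0.
Proof. intros Hd [HP HG] HF. destruct P as [x y]. unfold inH in HP; simpl in *. unfold Kp in HF; simpl in HF.
  rewrite K_Fa in HF.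
  assert (Hdr: (IZR p1 * IZR q2 - IZR q1 * IZR p2) * (IZR p1 * IZR q2 - IZR q1 * IZR p2) = 1).
  { rewrite <- !mult_IZR, <- minus_IZR, <- mult_IZR. unfold Fdet in Hd. destruct Hd as [E|E]; rewrite E; reflexivity. }
  set (P1 := IZR p1) in *; set (P2 := IZR p2) in *; set (Q1 := IZR q1) in *; set (Q2 := IZR q2) in *.
  destruct G as [A B C]. unfold K in HG; unfold bin; simpl in *.
  assert (Id: (P1*Q2-Q1*P2)*(P1*Q2-Q1*P2) * (A*(x*x+y*y)+B*x+C) =
     ((Q2*x-P2)*(Q2*x-P2) + Q2*Q2*(y*y))*(A*P1*P1+B*P1*Q1+C*Q1*Q1) +
     ((Q1*x-P1)*(Q1*x-P1) + Q1*Q1*(y*y))*(A*P2*P2+B*P2*Q2+C*Q2*Q2)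
     - 2*((Q1*x-P1)*(Q2*x-P2) + Q1*Q2*(y*y))*(A*P1*P2 + B/2*(P1*Q2+Q1*P2) + C*Q1*Q2)) by field.
  rewrite HG, HF in Id.
  set (w2 := (Q2*x-P2)*(Q2*x-P2) + Q2*Q2*(y*y)) in *.
  set (w1 := (Q1*x-P1)*(Q1*x-P1) + Q1*Q1*(y*y)) in *.
  assert (Hyy: 0 < y*y) by (apply Rmult_lt_0_compat; auto).
  assert (Hw: forall P Q, (P <> 0 \/ Q <> 0) -> 0 < (Q*x-P)*(Q*x-P) + Q*Q*(y*y)).
  { intros P Q [HPn|HQn].
    - destruct (Req_dec Q 0) as [E|E].
      + rewrite E. assert (0 < P*P) by (apply Rsqr_pos_lt; auto). nra.
      + assert (0 < Q*Q) by (apply Rsqr_pos_lt; auto). assert (0 < Q*Q*(y*y)) by (apply Rmult_lt_0_compat; auto).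
        assert (0 <= (Q*x-P)*(Q*x-P)) by apply Rle_0_sqr. lra.
    - assert (0 < Q*Q) by (apply Rsqr_pos_lt; auto). assert (0 < Q*Q*(y*y)) by (apply Rmult_lt_0_compat; auto).
      assert (0 <= (Q*x-P)*(Q*x-P)) by apply Rle_0_sqr. lra. }
  assert (Hn1: P1 <> 0 \/ Q1 <> 0). { apply NNPP; intro Hn. apply Classical_Prop.not_or_and in Hn as [Ha Hb].
    apply NNPP in Ha; apply NNPP in Hb. rewrite Ha, Hb in Hdr. lra. }
  assert (Hn2: P2 <> 0 \/ Q2 <> 0). { apply NNPP; intro Hn. apply Classical_Prop.not_or_and in Hn as [Ha Hb].
    apply NNPP in Ha; apply NNPP in Hb. rewrite Ha, Hb in Hdr. lra. }
  assert (W1 := Hw P1 Q1 Hn1). assert (W2 := Hw P2 Q2 Hn2). fold w1 in W1. fold w2 in W2.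
  set (g1 := A*P1*P1+B*P1*Q1+C*Q1*Q1) in *. set (g2 := A*P2*P2+B*P2*Q2+C*Q2*Q2) in *.
  assert (Hz: w2*g1 + w1*g2 = 0) by lra.
  assert (Hg: w2*(g1*g2) = - w1*(g2*g2)) by (replace (w2*(g1*g2)) with ((w2*g1)*g2) by ring; replace (w2*g1) with (-(w1*g2)) by lra; ring).
  assert (0 <= w1 * (g2*g2)) by (apply Rmult_le_pos; [lra|apply Rle_0_sqr]).
  destruct (Rle_dec (g1*g2) 0) as [Hle|Hgt]; auto.
  exfalso. assert (0 < w2*(g1*g2)) by (apply Rmult_lt_0_compat; lra). lra.
Qed.

Lemma region_ext (e f : region) : (forall p, e p <-> f p) -> e = f.
Proof. intros H. apply functional_extensionality. intro p. apply propositional_extensionality. apply H. Qed.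

Lemma F2_in {X Y : Type} (Rl : X -> Y -> Prop) l ly y : Forall2 Rl l ly -> In y ly -> exists x, In x l /\ Rl x y.
Proof. intros H1 Hin. induction H1; simpl in Hin; [contradiction|].
  destruct Hin as [<-|Hin]; [exists x; simpl; auto|]. destruct (IHForall2 Hin) as [z [Hz Hrz]]. exists z; simpl; auto. Qed.

Lemma pigeon {X Y : Type} (Rl : X -> Y -> Prop) (box : list Y) (l : list X) :
  NoDup l -> (forall x, In x l -> exists y, In y box /\ Rl x y) ->
  (forall x x' y, In x l -> In x' l -> Rl x y -> Rl x' y -> x = x') -> (length l <= length box)%nat.
Proof. intros Hnd Hex Hinj.
  assert (Hb: exists ly, Forall2 Rl l ly /\ incl ly box /\ NoDup ly).
  { induction l as [|x l IH].
    - exists nil. split; [constructor|]. split; [intros y []|constructor].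
    - inversion Hnd as [|x0 l0 Hnx Hnd']; subst.
      destruct IH as [ly [H1 [H2 H3]]]; auto.
      + intros z Hz. apply Hex. simpl; auto.
      + intros z z' y Hz Hz'. apply Hinj; simpl; auto.
      + destruct (Hex x (or_introl eq_refl)) as [y [Hy Hr]].
        exists (y :: ly). split; [constructor; auto|]. split.
        * intros u [<-|Hu]; auto.
        * constructor; auto. intro Hin.
          destruct (F2_in Rl l ly y H1 Hin) as [x' [Hx' Hr']].
          assert (x = x') by (apply (Hinj x x' y); simpl; auto).
          subst x'. contradiction. }
  destruct Hb as [ly [H1 [H2 H3]]].
  rewrite (Forall2_length H1). apply NoDup_incl_length; auto.
Qed.

Definition rng (N : Z) : list Z := map (fun k => (Z.of_nat k - N)%Z) (seq 0 (Z.to_nat (2*N+1))).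
Lemma in_rng N z : (- N <= z <= N)%Z -> In z (rng N).
Proof. intros H. unfold rng. apply in_map_iff. exists (Z.to_nat (z + N)). split.
  - rewrite Z2Nat.id; lia.
  - apply in_seq. lia. Qed.

Definition box6 (N : Z) := list_prod (rng N) (list_prod (rng N) (list_prod (rng N) (list_prod (rng N) (list_prod (rng N) (rng N))))).
Lemma in_box6 N a b c d e f : (- N <= a <= N)%Z -> (- N <= b <= N)%Z -> (- N <= c <= N)%Z ->
  (- N <= d <= N)%Z -> (- N <= e <= N)%Z -> (- N <= f <= N)%Z -> In (a,(b,(c,(d,(e,f))))) (box6 N).
Proof. intros. unfold box6. repeat (apply in_prod_iff; split; [apply in_rng; auto|]). apply in_rng; auto. Qed.

Lemma nonsq s t : (3 <= Z.abs t)%Z -> (s*s <> t*t - 4)%Z.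
Proof. intros Ht E.
  assert (Hs: (Z.abs s * Z.abs s = Z.abs t * Z.abs t - 4)%Z) by (rewrite <- !Z.abs_mul, !Z.abs_eq; nia).
  set (a := Z.abs s) in *. set (b := Z.abs t) in *. assert (0 <= a)%Z by apply Z.abs_nonneg.
  destruct (Z_lt_le_dec a b) as [H1|H1]; [|nia].
  assert (a <= b - 1)%Z by lia. nia. Qed.

Lemma zbound A B C D N : (B*B - 4*A*C = D)%Z -> (D <= N)%Z -> (A*C < 0)%Z ->
  (- N <= A <= N /\ - N <= B <= N /\ - N <= C <= N)%Z.
Proof. intros E HD HAC.
  assert (HB: (B*B <= N)%Z) by nia.
  destruct (Z.abs_spec A) as [[? HA]|[? HA]]; destruct (Z.abs_spec C) as [[? HC]|[? HC]];
  (assert (A <> 0)%Z by (intro; subst; lia)); (assert (C <> 0)%Z by (intro; subst; lia));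
  (assert (-N <= B <= N)%Z by nia); repeat split; nia.
Qed.

Definition binZ (A B C p q : Z) := (A*p*p + B*p*q + C*q*q)%Z.
Definition midZ (A B C p1 q1 p2 q2 : Z) := (2*A*p1*p2 + B*(p1*q2+p2*q1) + 2*C*q1*q2)%Z.

Lemma T_FZ A B C p1 q1 p2 q2 : T (FZ A B C) (IZR p1) (IZR p2) (IZR q1) (IZR q2) =
  FZ (binZ A B C p1 q1) (midZ A B C p1 q1 p2 q2) (binZ A B C p2 q2).
Proof. unfold FZ, T, binZ, midZ. apply form_eq; cbn [fA fB fC]; repeat rewrite ?plus_IZR, ?mult_IZR; ring. Qed.

Lemma bin_IZR A B C p q : bin (FZ A B C) (IZR p) (IZR q) = IZR (binZ A B C p q).
Proof. unfold bin, FZ, binZ; cbn [fA fB fC]. repeat rewrite ?plus_IZR, ?mult_IZR. ring. Qed.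

Lemma disc_transf A B C p1 q1 p2 q2 :
  (midZ A B C p1 q1 p2 q2 * midZ A B C p1 q1 p2 q2 - 4 * binZ A B C p1 q1 * binZ A B C p2 q2
   = (p1*q2 - q1*p2)*(p1*q2 - q1*p2)*(B*B - 4*A*C))%Z.
Proof. unfold midZ, binZ. ring. Qed.

Lemma bin_nz gam A B C t p1 q1 p2 q2 : Zgood gam A B C t -> Fdet p1 q1 p2 q2 ->
  binZ A B C p1 q1 <> 0%Z /\ binZ A B C p2 q2 <> 0%Z.
Proof. intros [_ [Ht Et]] Hd. pose proof (disc_transf A B C p1 q1 p2 q2) as E.
  assert (Hd2: ((p1*q2 - q1*p2)*(p1*q2 - q1*p2) = 1)%Z) by (unfold Fdet in Hd; destruct Hd as [H|H]; rewrite H; reflexivity).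
  rewrite Hd2, Et in E. split; intro Z0; rewrite Z0 in E; apply (nonsq (midZ A B C p1 q1 p2 q2) t Ht); lia.
Qed.

Lemma A_nz gam A B C t : Zgood gam A B C t -> fA (FZ A B C) <> 0.
Proof. intros [_ [Ht Et]]. simpl. intro E. apply eq_IZR in E. subst A.
  apply (nonsq B t Ht). lia. Qed.

Lemma edge_bin gam A B C t w1 w2 e p1 q1 p2 q2 :
  Zgood gam A B C t -> Fdet p1 q1 p2 q2 -> (forall p, e p <-> gs (FaZ p1 q1 p2 q2) p) ->
  meets e (hseg (tile_center w1) (tile_center w2)) ->
  meets gam (tile w1) -> meets gam (tile w2) ->
  (binZ A B C p1 q1 * binZ A B C p2 q2 < 0)%Z.
Proof. intros HG Hd He [p [Hpe Hps]] [P1 [HP1g HP1t]] [P2 [HP2g HP2t]].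
  set (Fa := FaZ p1 q1 p2 q2).
  assert (Hp0: Kp Fa p = 0) by (apply He in Hpe; apply Hpe).
  destruct HP1t as [r1 [Hr1 ->]]. destruct HP2t as [r2 [Hr2 ->]].
  destruct (tile_side w1 p1 q1 p2 q2 Hd r1 Hr1) as [S1 N1].
  destruct (tile_side w2 p1 q1 p2 q2 Hd r2 Hr2) as [S2 N2].
  fold Fa in S1, N1, S2, N2.
  assert (Hc1 := word_H w1 center0 center_H). assert (Hc2 := word_H w2 center0 center_H).
  assert (Hseg := seg_sign Fa (tile_center w1) (tile_center w2) p Hc1 Hc2 Hps Hp0 N1 N2).
  unfold tile_center in Hseg.
  set (u1 := Kp Fa (word_act w1 r1)) in *. set (u2 := Kp Fa (word_act w2 r2)) in *.
  set (k1 := Kp Fa (word_act w1 center0)) in *. set (k2 := Kp Fa (word_act w2 center0)) in *.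
  assert (Hu: u1 * u2 <= 0).
  { assert (E: (u1*k1)*(u2*k2) = (u1*u2)*(k1*k2)) by ring.
    assert (0 <= (u1*k1)*(u2*k2)) by (apply Rmult_le_pos; lra).
    destruct (Rle_dec (u1*u2) 0) as [Hx|Hx]; auto. exfalso.
    assert ((u1*u2)*(k1*k2) < 0) by (apply Rmult_pos_neg; lra). lra. }
  apply (proj1 HG) in HP1g. apply (proj1 HG) in HP2g.
  destruct (cross_point (FZ A B C) Fa _ _ (A_nz gam A B C t HG) HP1g HP2g Hu) as [P [HPg HPF]].
  pose proof (bin_sign (FZ A B C) p1 q1 p2 q2 P Hd HPg HPF) as Hb.
  rewrite !bin_IZR, <- mult_IZR in Hb. apply le_IZR in Hb.
  destruct (bin_nz gam A B C t p1 q1 p2 q2 HG Hd) as [Z1 Z2].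
  assert (binZ A B C p1 q1 * binZ A B C p2 q2 <> 0)%Z by (intro E; apply Z.mul_eq_0 in E; tauto).
  lia.
Qed.

Lemma autom_from G a b c d a' b' c' d' : a'*d' - b'*c' = 1 -> T G a b c d = T G a' b' c' d' ->
  T G (a*d' - b*c') (-a*b' + b*a') (c*d' - d*c') (-c*b' + d*a') = G.
Proof. intros Hd E.
  transitivity (T (T G a b c d) d' (-b') (-c') a').
  { rewrite T_comp. apply T_ext; ring. }
  rewrite E, T_comp. rewrite <- (T_id G) at 2. apply T_ext; lra.
Qed.

Lemma same_tuple G1 G2 a b c d a' b' c' d' : 0 < dsc G1 -> 0 < dsc G2 ->
  a*d - b*c = 1 -> a'*d' - b'*c' = 1 ->
  T G1 a b c d = T G1 a' b' c' d' -> T G2 a b c d = T G2 a' b' c' d' ->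
  (forall p, gs G1 p <-> gs G2 p) \/ (exists s, s*s = 1 /\ a = s*a' /\ b = s*b' /\ c = s*c' /\ d = s*d').
Proof. intros HD1 HD2 Hd Hd' E1 E2.
  set (ha := a*d' - b*c'). set (hb := -a*b' + b*a'). set (hc := c*d' - d*c'). set (hd := -c*b' + d*a').
  assert (Hh: ha*hd - hb*hc = 1).
  { transitivity ((a*d - b*c)*(a'*d' - b'*c')); [unfold ha, hb, hc, hd; ring|]. rewrite Hd, Hd'; ring. }
  assert (T1 := autom_from G1 a b c d a' b' c' d' Hd' E1).
  assert (T2 := autom_from G2 a b c d a' b' c' d' Hd' E2).
  fold ha hb hc hd in T1, T2.
  destruct (autom_cross G1 ha hb hc hd Hh T1) as [x1 [x2 x3]].
  destruct (autom_cross G2 ha hb hc hd Hh T2) as [y1 [y2 y3]].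
  destruct (classic (hc <> 0 \/ hd - ha <> 0 \/ - hb <> 0)) as [Hn|Hn].
  - left. destruct (cross_scal G1 hc (hd - ha) (-hb) Hn) as [m1 Hm1]; [lra|lra|lra|].
    destruct (cross_scal G2 hc (hd - ha) (-hb) Hn) as [m2 Hm2]; [lra|lra|lra|].
    assert (m1 <> 0) by (intro Z; rewrite Hm1, Z, dsc_scal in HD1; lra).
    assert (m2 <> 0) by (intro Z; rewrite Hm2, Z, dsc_scal in HD2; lra).
    intro p. rewrite Hm1, Hm2, !gs_scal; auto. reflexivity.
  - right. assert (hc = 0 /\ hd = ha /\ hb = 0) as [Z1 [Z2 Z3]].
    { split; [|split]; apply NNPP; intro; apply Hn; [left|right;left|right;right]; lra. }
    exists ha. split. { rewrite Z1, Z2, Z3 in Hh. lra. }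
    assert (Ea: ha*a' + hb*c' = a*(a'*d'-b'*c')) by (unfold ha, hb; ring).
    assert (Eb: ha*b' + hb*d' = b*(a'*d'-b'*c')) by (unfold ha, hb; ring).
    assert (Ec: hc*a' + hd*c' = c*(a'*d'-b'*c')) by (unfold hc, hd; ring).
    assert (Ed: hc*b' + hd*d' = d*(a'*d'-b'*c')) by (unfold hc, hd; ring).
    rewrite Hd' in Ea, Eb, Ec, Ed.
    rewrite Z1, Z2, Z3 in *. repeat split; lra.
Qed.

Definition tup (A1 B1 C1 A2 B2 C2 p1 q1 p2 q2 : Z) : Z*(Z*(Z*(Z*(Z*Z)))) :=
  (binZ A1 B1 C1 p1 q1, (midZ A1 B1 C1 p1 q1 p2 q2, (binZ A1 B1 C1 p2 q2,
  (binZ A2 B2 C2 p1 q1, (midZ A2 B2 C2 p1 q1 p2 q2, binZ A2 B2 C2 p2 q2))))).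

Lemma edge_data e : is_edge e -> exists p1 q1 p2 q2, (p1*q2 - q1*p2 = 1)%Z /\ forall p, e p <-> gs (FaZ p1 q1 p2 q2) p.
Proof. intros [w Hw].
  assert (exists s, (s = side1 \/ s = side2 \/ s = side3) /\ e = img (word_act w) s) as [s [Hs ->]].
  { destruct Hw as [Hx|[Hx|Hx]].
    - exists side1; split; [left; reflexivity|exact Hx].
    - exists side2; split; [right; left; reflexivity|exact Hx].
    - exists side3; split; [right; right; reflexivity|exact Hx]. }
  destruct (edge_form w s Hs) as [p1 [q1 [p2 [q2 [Hd He]]]]].
  destruct Hd as [Hd|Hd].
  - exists p1, q1, p2, q2. split; auto.
  - exists p2, q2, p1, q1. split; [lia|]. intro p. rewrite He. unfold gs. rewrite Fa_swap. reflexivity.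
Qed.

Lemma Fa_scale p1 q1 p2 q2 p1' q1' p2' q2' s x y : s*s = 1 ->
  IZR p1 = s * IZR p1' -> IZR p2 = s * IZR p2' -> IZR q1 = s * IZR q1' -> IZR q2 = s * IZR q2' ->
  K (FaZ p1 q1 p2 q2) x y = K (FaZ p1' q1' p2' q2') x y.
Proof. intros Hs E1 E2 E3 E4. rewrite !K_Fa, E1, E2, E3, E4.
  transitivity ((s*s)*((IZR q1' * x - IZR p1') * (IZR q2' * x - IZR p2') + IZR q1' * IZR q2' * (y * y))); [ring|].
  rewrite Hs; ring. Qed.

Theorem mainTheorem12 :
  forall Gam : region -> Prop, modular_pattern Gam ->
  exists m : nat, forall w1 w2 : list refl_gen,
    comb_dist_ge w1 w2 m ->
    forall gam1 gam2, Gam gam1 -> Gam gam2 ->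
      meets gam1 (tile w1) -> meets gam1 (tile w2) ->
      meets gam2 (tile w1) -> meets gam2 (tile w2) ->
      gam1 = gam2.
Proof.
  intros Gam Hpat. destruct (orbit_bound Gam Hpat) as [N HN].
  exists (S (length (box6 N))).
  intros w1 w2 [l [Hlen [Hnd Hall]]] gam1 gam2 Hg1 Hg2 M11 M12 M21 M22.
  destruct (HN gam1 Hg1) as [A1 [B1 [C1 [t1 [Z1 Ht1]]]]].
  destruct (HN gam2 Hg2) as [A2 [B2 [C2 [t2 [Z2 Ht2]]]]].
  apply NNPP; intro Hne.
  set (Rel := fun (e : region) (tau : Z*(Z*(Z*(Z*(Z*Z))))) => exists p1 q1 p2 q2, (p1*q2 - q1*p2 = 1)%Z /\
     (forall p, e p <-> gs (FaZ p1 q1 p2 q2) p) /\ tau = tup A1 B1 C1 A2 B2 C2 p1 q1 p2 q2).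
  assert (Hle: (length l <= length (box6 N))%nat).
  { apply (pigeon Rel (box6 N) l Hnd).
    - intros e He. rewrite Forall_forall in Hall. destruct (Hall e He) as [Hed Hme].
      destruct (edge_data e Hed) as [p1 [q1 [p2 [q2 [Hd Hee]]]]].
      assert (Hfd: Fdet p1 q1 p2 q2) by (left; exact Hd).
      pose proof (edge_bin gam1 A1 B1 C1 t1 w1 w2 e p1 q1 p2 q2 Z1 Hfd Hee Hme M11 M12) as S1.
      pose proof (edge_bin gam2 A2 B2 C2 t2 w1 w2 e p1 q1 p2 q2 Z2 Hfd Hee Hme M21 M22) as S2.
      exists (tup A1 B1 C1 A2 B2 C2 p1 q1 p2 q2). split.
      + destruct Z1 as [_ [_ E1]]. destruct Z2 as [_ [_ E2]].
        pose proof (disc_transf A1 B1 C1 p1 q1 p2 q2) as D1. pose proof (disc_transf A2 B2 C2 p1 q1 p2 q2) as D2.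
        rewrite Hd, E1 in D1. rewrite Hd, E2 in D2.
        destruct (zbound _ _ _ (t1*t1-4)%Z N ltac:(rewrite D1; ring) Ht1 S1) as [a1 [a2 a3]].
        destruct (zbound _ _ _ (t2*t2-4)%Z N ltac:(rewrite D2; ring) Ht2 S2) as [b1 [b2 b3]].
        apply in_box6; auto.
      + exists p1, q1, p2, q2. auto.
    - intros e f tau _ _ [p1 [q1 [p2 [q2 [Hd [He Ht]]]]]] [p1' [q1' [p2' [q2' [Hd' [Hf Ht']]]]]].
      rewrite Ht in Ht'. unfold tup in Ht'. injection Ht'. intros F6 F5 F4 F3 F2 F1.
      assert (Hdr: IZR p1 * IZR q2 - IZR p2 * IZR q1 = 1).
      { rewrite <- !mult_IZR, <- minus_IZR. replace (p1*q2 - p2*q1)%Z with 1%Z by lia. reflexivity. }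
      assert (Hdr': IZR p1' * IZR q2' - IZR p2' * IZR q1' = 1).
      { rewrite <- !mult_IZR, <- minus_IZR. replace (p1'*q2' - p2'*q1')%Z with 1%Z by lia. reflexivity. }
      assert (E1: T (FZ A1 B1 C1) (IZR p1) (IZR p2) (IZR q1) (IZR q2) = T (FZ A1 B1 C1) (IZR p1') (IZR p2') (IZR q1') (IZR q2')).
      { rewrite !T_FZ. rewrite F1, F2, F3. reflexivity. }
      assert (E2: T (FZ A2 B2 C2) (IZR p1) (IZR p2) (IZR q1) (IZR q2) = T (FZ A2 B2 C2) (IZR p1') (IZR p2') (IZR q1') (IZR q2')).
      { rewrite !T_FZ. rewrite F4, F5, F6. reflexivity. }
      destruct (same_tuple (FZ A1 B1 C1) (FZ A2 B2 C2) _ _ _ _ _ _ _ _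
         (Zgood_pos _ _ _ _ _ Z1) (Zgood_pos _ _ _ _ _ Z2) Hdr Hdr' E1 E2) as [Hgs|[s [Hs [Ea [Eb [Ec Ed]]]]]].
      + exfalso. apply Hne. apply region_ext. intro p. rewrite (proj1 Z1), (proj1 Z2). apply Hgs.
      + apply region_ext. intro p. rewrite He, Hf. unfold gs.
        rewrite (Fa_scale p1 q1 p2 q2 p1' q1' p2' q2' s (fst p) (snd p) Hs Ea Eb Ec Ed). reflexivity. }
  lia.
Qed.
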